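(* Let $(\mathcal V,\mathcal W,\lambda)$ be a FTvN system. If $E\subseteq \mathcal V$ is convex and spectral, then $\lambda(E)$ is convex in $\mathcal W$. In particular, if $E$ is a spectral set that is also a convex cone, then $\lambda(E)$ is a convex cone.
   Context: A Fan-Theobald-von Neumann (FTvN) system is a triple $(\mathcal V,\mathcal W,\lambda)$ where $\mathcal V,\mathcal W$ are real inner product spaces and $\lambda:\mathcal V\to\mathcal W$ is a map such that: (A1) $\|\lambda(x)\|=\|x\|$ for all $x\in\mathcal V$; (A2) $\langle x,y\rangle\le\langle\lambda(x),\lambda(y)\rangle$ for all $x,y\in\mathcal V$; (A3) for every $c\in\mathcal V$ and $q\in\lambda(\mathcal V)$ there exists $x\in\mathcal V$ with $\lambda(x)=q$ and $\langle c,x\rangle=\langle\lambda(c),\lambda(x)\rangle$. The $\lambda$-orbit of $u\in\mathcal V$ is $[u]=\{x\in\mathcal V:\lambda(x)=\lambda(u)\}$. A set $E\subseteq\mathcal V$ is spectral if $E=\lambda^{-1}(Q)$ for some $Q\subseteq\mathcal W$, equivalently if $x\in E$ implies $[x]\subseteq E$. A cone is a nonempty set closed under multiplication by nonnegative scalars. *)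

(* Defs.v *)
From HB Require Import structures.
From mathcomp Require Import all_boot all_order all_algebra.
From mathcomp Require Import boolp classical_sets reals.
Set Implicit Arguments. Unset Strict Implicit. Unset Printing Implicit Defensive.
Import Order.TTheory GRing.Theory Num.Theory.
Local Open Scope ring_scope.
Local Open Scope classical_set_scope.

Definition is_inner_product (R : realType) (V : lmodType R) (ip : V -> V -> R) : Prop :=
  [/\ (forall x y, ip x y = ip y x),
      (forall (a : R) (x y z : V), ip (a *: x + y) z = a * ip x z + ip y z)
    & (forall x, x != 0 -> 0 < ip x x)].

Definition ipnorm (R : realType) (V : lmodType R) (ip : V -> V -> R) (x : V) : R :=
  Num.sqrt (ip x x).

Definition FTvN_system (R : realType) (V W : lmodType R)
  (ipV : V -> V -> R) (ipW : W -> W -> R) (lam : V -> W) : Prop :=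
  [/\ is_inner_product ipV, is_inner_product ipW,
      (forall x, ipnorm ipW (lam x) = ipnorm ipV x),
      (forall x y, ipV x y <= ipW (lam x) (lam y))
    & (forall c q, range lam q ->
         exists x, lam x = q /\ ipV c x = ipW (lam c) (lam x))].

Definition convex_set (R : realType) (V : lmodType R) (E : set V) : Prop :=
  forall x y (t : R), E x -> E y -> 0 <= t -> t <= 1 -> E (t *: x + (1 - t) *: y).

Definition is_cone (R : realType) (V : lmodType R) (E : set V) : Prop :=
  E !=set0 /\ forall x (a : R), E x -> 0 <= a -> E (a *: x).

Definition spectral_set (R : realType) (V W : lmodType R) (lam : V -> W) (E : set V) : Prop :=
  exists Q : set W, E = lam @^-1` Q.

(* Main.v *)
Require Import Defs.
From HB Require Import structures.
From mathcomp Require Import all_boot all_order all_algebra.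
From mathcomp Require Import boolp classical_sets reals.
From mathcomp Require Import ring lra.
Import Order.TTheory GRing.Theory Num.Theory.
Local Open Scope ring_scope.
Local Open Scope classical_set_scope.

Section IP.
Variables (R : realType) (V : lmodType R) (ip : V -> V -> R).
Hypothesis hip : is_inner_product ip.

Lemma ipC x y : ip x y = ip y x.
Proof. by case: hip. Qed.

Lemma ip0l z : ip 0 z = 0.
Proof.
case: hip => _ hl _.
have := hl 1 0 0 z; rewrite scaler0 addr0 mul1r.
lra.
Qed.

Lemma ipLl a b x y z : ip (a *: x + b *: y) z = a * ip x z + b * ip y z.
Proof.
case: hip => _ hl _.
rewrite hl -[b *: y]addr0 hl ip0l addr0; done.
Qed.

Lemma ipLr a b x y z : ip z (a *: x + b *: y) = a * ip z x + b * ip z y.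
Proof. by rewrite ipC ipLl !(ipC x) (ipC y). Qed.

Lemma ipZZ a b x y :
  ip (a *: x + b *: y) (a *: x + b *: y) =
  a ^+ 2 * ip x x + 2 * a * b * ip x y + b ^+ 2 * ip y y.
Proof. rewrite ipLl !ipLr (ipC y x); ring. Qed.

Lemma ip_ge0 x : 0 <= ip x x.
Proof.
case: hip => _ _ hp; have [->|/hp/ltW//] := eqVneq x 0.
by rewrite ip0l.
Qed.

Lemma ip_eq0 x : ip x x <= 0 -> x = 0.
Proof.
case: hip => _ _ hp => h; apply/eqP; apply/negPn/negP => /hp; lra.
Qed.
End IP.

Lemma sqrt_inj (R : realType) (a b : R) : 0 <= a -> 0 <= b ->
  Num.sqrt a = Num.sqrt b -> a = b.
Proof. by move=> ha hb h; rewrite -(sqr_sqrtr ha) -(sqr_sqrtr hb) h. Qed.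

Lemma key (R : realType) (V W : lmodType R)
  (ipV : V -> V -> R) (ipW : W -> W -> R) (lam : V -> W) :
  FTvN_system ipV ipW lam -> forall u x (s r : R), 0 <= s -> 0 <= r ->
  ipV u x = ipW (lam u) (lam x) ->
  lam (s *: u + r *: x) = s *: lam u + r *: lam x.
Proof.
case=> hV hW hn hle _ u x s r hs hr hux.
have nrm y : ipW (lam y) (lam y) = ipV y y.
  by apply: sqrt_inj; [exact: ip_ge0|exact: ip_ge0|exact: hn].
set z := s *: u + r *: x; set w := s *: lam u + r *: lam x.
have e1 : ipW (lam z) (lam z) = ipV z z by [].
have e2 : ipW w w = ipV z z.
  by rewrite /w /z !ipZZ // !nrm hux.
have e3 : ipV z z <= ipW (lam z) w.
  rewrite /w ipLr // {1}/z ipLr //.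
  have h1 := hle z u; have h2 := hle z x.
  rewrite -/z; nra.
have : ipW (1 *: lam z + (-1) *: w) (1 *: lam z + (-1) *: w) <= 0.
  rewrite ipZZ // e1 e2; nra.
move/(@ip_eq0 _ _ _ hW); rewrite scale1r scaleN1r => /eqP; rewrite subr_eq0 => /eqP.
done.
Qed.

Theorem proposition5p2 (R : realType) (V W : lmodType R)
  (ipV : V -> V -> R) (ipW : W -> W -> R) (lam : V -> W) :
  FTvN_system ipV ipW lam ->
  (forall E : set V, convex_set E -> spectral_set lam E -> convex_set (lam @` E)) /\
  (forall E : set V, spectral_set lam E -> convex_set E -> is_cone E ->
     convex_set (lam @` E) /\ is_cone (lam @` E)).
Proof.
move=> hF.
have conv : forall E : set V, convex_set E -> spectral_set lam E ->
    convex_set (lam @` E).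
  move=> E hc [Q hQ] _ _ t [u Eu <-] [v Ev <-] t0 t1.
  have [_ _ _ _ h3] := hF.
  have [x [hx hux]] := h3 u (lam v) (ex_intro2 _ _ v I erefl).
  have Ex : E x by rewrite hQ /preimage /= hx; move: Ev; rewrite hQ.
  exists (t *: u + (1 - t) *: x); first exact: hc.
  rewrite (@key _ _ _ _ _ _ hF) // ?hx //; lra.
split=> // E hs hc [[y Ey] hcone]; split; first exact: conv.
split; first by exists (lam y), y.
move=> _ a [x Ex <-] a0; exists (a *: x); first exact: hcone.
have [hV _ _ _ _] := hF.
have := @key _ _ _ _ _ _ hF x x a 0 a0 (lexx _).
rewrite !scale0r !addr0; apply.
have [_ hW hn _ _] := hF.
by apply/esym/sqrt_inj; [exact: ip_ge0|exact: ip_ge0|exact: hn].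
Qed.
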